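(* Let $\mathcal{K}$ be a statistical $\mathcal{ALC}$ knowledge base and $C, D$ arbitrary $\mathcal{ALC}$ concepts. Suppose there exist $\mathcal{I}_0, \mathcal{I}_1 \in \mathrm{Mod}(\mathcal{K})$ with $[D]^{\mathcal{I}_0} > 0$, $[D]^{\mathcal{I}_1} > 0$ and $$r_0 = \frac{[C \sqcap D]^{\mathcal{I}_0}}{[D]^{\mathcal{I}_0}} < \frac{[C \sqcap D]^{\mathcal{I}_1}}{[D]^{\mathcal{I}_1}} = r_1 .$$ Then there exists $\mathcal{I}_{0.5} \in \mathrm{Mod}(\mathcal{K})$ with $[D]^{\mathcal{I}_{0.5}} > 0$ and $\frac{[C \sqcap D]^{\mathcal{I}_{0.5}}}{[D]^{\mathcal{I}_{0.5}}} = \frac{r_0 + r_1}{2}$.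
   Context: $\mathcal{ALC}$ concepts over disjoint sets $N_C$, $N_R$: $C ::= \top \mid A \mid \neg C \mid C \sqcap C \mid \exists r.C$, standard semantics. Interpretations $\mathcal{I} = (\Delta^{\mathcal{I}}, \cdot^{\mathcal{I}})$ have non-empty finite domain; $[X]^{\mathcal{I}} := |X^{\mathcal{I}}|$. A conditional is $(C \mid D)[\ell,u]$ with concepts $C,D$ and rationals $0 \le \ell \le u \le 1$; $\mathcal{I} \models (C \mid D)[\ell,u]$ iff $[D]^{\mathcal{I}} = 0$ or $[C \sqcap D]^{\mathcal{I}}/[D]^{\mathcal{I}} \in [\ell,u]$. A statistical $\mathcal{ALC}$ knowledge base $\mathcal{K}$ is a finite set of conditionals; $\mathrm{Mod}(\mathcal{K})$ is the set of finite interpretations satisfying all of them. *)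

(* Defs.v *)
From HB Require Import structures.
From mathcomp Require Import all_boot all_order all_algebra.
From Stdlib Require Lists.List.
Unset Printing Implicit Defensive.
Import Order.TTheory GRing.Theory Num.Theory.

(* ALC concepts over concept names NC and role names NR (distinct types,
   hence disjoint). *)
Inductive concept (NC NR : Type) : Type :=
  | CTop : concept NC NR
  | CAtom : NC -> concept NC NR
  | CNeg : concept NC NR -> concept NC NR
  | CAnd : concept NC NR -> concept NC NR -> concept NC NR
  | CEx : NR -> concept NC NR -> concept NC NR.
Arguments CTop {NC NR}.
Arguments CAtom {NC NR}.
Arguments CNeg {NC NR}.
Arguments CAnd {NC NR}.
Arguments CEx {NC NR}.

Record interp (NC NR : Type) := Interp {
  dom : finType;
  dom_nonempty : 0 < #|dom|;
  cint : NC -> pred dom;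
  rint : NR -> rel dom
}.

Fixpoint csem (NC NR : Type) (I : interp NC NR) (C : concept NC NR) (x : dom NC NR I) : bool :=
  match C with
  | CTop => true
  | CAtom A => cint NC NR I A x
  | CNeg C' => ~~ csem NC NR I C' x
  | CAnd C1 C2 => csem NC NR I C1 x && csem NC NR I C2 x
  | CEx r C' => [exists y, rint NC NR I r x y && csem NC NR I C' y]
  end.
Arguments csem {NC NR} I C x.
Arguments dom {NC NR}.
Arguments cint {NC NR}.
Arguments rint {NC NR}.

Definition card_c {NC NR : Type} (I : interp NC NR) (C : concept NC NR) : nat :=
  #|[pred x | csem I C x]|.

Definition cratio {NC NR : Type} (I : interp NC NR) (C D : concept NC NR) : rat :=
  ((card_c I (CAnd C D))%:R / (card_c I D)%:R)%R.

Record conditional (NC NR : Type) := Cond {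
  ccon : concept NC NR;
  cprem : concept NC NR;
  clow : rat;
  cupp : rat
}.
Arguments ccon {NC NR}.
Arguments cprem {NC NR}.
Arguments clow {NC NR}.
Arguments cupp {NC NR}.


Definition wf_cond {NC NR : Type} (c : conditional NC NR) : Prop :=
  (0 <= clow c)%R /\ (clow c <= cupp c)%R /\ (cupp c <= 1)%R.

Definition sat_cond {NC NR : Type} (I : interp NC NR) (c : conditional NC NR) : Prop :=
  card_c I (cprem c) = 0%N \/
  ((clow c <= cratio I (ccon c) (cprem c))%R /\ (cratio I (ccon c) (cprem c) <= cupp c)%R).

Definition kb (NC NR : Type) := seq (conditional NC NR).

Definition wf_kb {NC NR : Type} (K : kb NC NR) : Prop :=
  forall c, Stdlib.Lists.List.In c K -> wf_cond c.

Definition is_model {NC NR : Type} (K : kb NC NR) (I : interp NC NR) : Prop :=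
  forall c, Stdlib.Lists.List.In c K -> sat_cond I c.

(* Main.v *)
Require Import Defs.
From HB Require Import structures.
From mathcomp Require Import all_boot all_order all_algebra.
From mathcomp Require Import ring lra.
Import Order.TTheory GRing.Theory Num.Theory.

Section U.
Variables (NC NR : Type) (I0 I1 : interp NC NR) (m n : nat) (Hm : (0 < m)%N).

Definition Udom : finType := ('I_m * dom I0 + 'I_n * dom I1)%type.

Lemma Udom_ne : (0 < #|Udom|)%N.
Proof.
rewrite /Udom card_sum !card_prod card_ord.
have := dom_nonempty _ _ I0.
by case: m Hm => // m' _; case: #|dom I0| => // k _; rewrite ltn_addr.
Qed.

Definition Uint : interp NC NR :=
  @Interp NC NR Udom Udom_ne
    (fun A u => match u with inl (_, x) => cint I0 A x | inr (_, x) => cint I1 A x end)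
    (fun r u v => match u, v with
                  | inl (i, x), inl (j, y) => (i == j) && rint I0 r x y
                  | inr (i, x), inr (j, y) => (i == j) && rint I1 r x y
                  | _, _ => false end).

Lemma Usem C : (forall i x, csem Uint C (inl (i, x)) = csem I0 C x) /\
               (forall i x, csem Uint C (inr (i, x)) = csem I1 C x).
Proof.
elim: C => [|A|C [IH1 IH2]|C1 [IHa1 IHa2] C2 [IHb1 IHb2]|r C [IH1 IH2]] /=.
- by [].
- by [].
- by split=> i x; rewrite ?IH1 ?IH2.
- by split=> i x; rewrite ?IHa1 ?IHa2 ?IHb1 ?IHb2.
- split=> i x.
  + apply/existsP/existsP.
    * case=> [[[j y]|[j y]]] //= /andP [/andP [_ H1] H2].
      by exists y; rewrite H1 -(IH1 j).
    * case=> y /andP [H1 H2]. exists (inl (i, y)) => /=.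
      by rewrite eqxx H1 IH1.
  + apply/existsP/existsP.
    * case=> [[[j y]|[j y]]] //= /andP [/andP [_ H1] H2].
      by exists y; rewrite H1 -(IH2 j).
    * case=> y /andP [H1 H2]. exists (inr (i, y)) => /=.
      by rewrite eqxx H1 IH2.
Qed.

Lemma prod_count (T : finType) (k : nat) (q : pred T) :
  \sum_(p : 'I_k * T | q p.2) 1 = k * #|q|.
Proof.
rewrite (eq_bigl (fun p : 'I_k * T => xpredT p.1 && q p.2)) //.
rewrite -(pair_big xpredT q (fun _ _ => 1)) /=.
under eq_bigr do rewrite sum1_card.
by rewrite sum_nat_const card_ord.
Qed.

Lemma Ucard C : card_c Uint C = m * card_c I0 C + n * card_c I1 C.
Proof.
rewrite /card_c -sum1_card big_sumType /=.
have [H1 H2] := Usem C.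
rewrite (eq_bigl (fun p : 'I_m * dom I0 => csem I0 C p.2)); last first.
  by case=> i x /=; rewrite !inE H1.
rewrite (eq_bigl (fun p : 'I_n * dom I1 => csem I1 C p.2)); last first.
  by case=> i x /=; rewrite !inE H2.
by rewrite !prod_count.
Qed.
End U.


Lemma card_and_le (NC NR : Type) (I : interp NC NR) X P :
  (card_c I (CAnd X P) <= card_c I P)%N.
Proof.
apply: subset_leq_card; apply/subsetP => x; rewrite !inE /=. by case/andP.
Qed.

Lemma sat_bounds (NC NR : Type) (I : interp NC NR) (c : conditional NC NR) :
  sat_cond I c ->
  (clow c * (card_c I (cprem c))%:R <= (card_c I (CAnd (ccon c) (cprem c)))%:R)%R /\
  ((card_c I (CAnd (ccon c) (cprem c)))%:R <= cupp c * (card_c I (cprem c))%:R)%R.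
Proof.
move=> Hs.
have Hab := card_and_le _ _ I (ccon c) (cprem c).
case: (posnP (card_c I (cprem c))) => Hb.
  by move: Hab; rewrite Hb leqn0 => /eqP ->; rewrite !mulr0.
case: Hs => [H0|[Hl Hu]]; first by rewrite H0 in Hb.
have Hb' : (0 < (card_c I (cprem c))%:R :> rat)%R by rewrite ltr0n.
move: Hl Hu; rewrite /cratio ler_pdivlMr // ler_pdivrMr //.
Qed.

Theorem mainTheorem3 (NC NR : Type) (K : kb NC NR) (C D : concept NC NR)
  (I0 I1 : interp NC NR) :
  wf_kb K ->
  is_model K I0 -> is_model K I1 ->
  (0 < card_c I0 D)%N -> (0 < card_c I1 D)%N ->
  (cratio I0 C D < cratio I1 C D)%R ->
  exists I : interp NC NR,
    is_model K I /\ (0 < card_c I D)%N /\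
    cratio I C D = ((cratio I0 C D + cratio I1 C D) / 2%:R)%R.
Proof.
move=> _ HM0 HM1 Hd0 Hd1 _.
exists (Uint _ _ I0 I1 (card_c I1 D) (card_c I0 D) Hd1).
split; [|split].
- move=> c Hc.
  have [l0 u0] := sat_bounds _ _ I0 c (HM0 c Hc).
  have [l1 u1] := sat_bounds _ _ I1 c (HM1 c Hc).
  rewrite /sat_cond.
  case: (posnP (card_c (Uint _ _ I0 I1 (card_c I1 D) (card_c I0 D) Hd1) (cprem c))) => Hb;
    [by left | right].
  have Hb' : (0 < (card_c (Uint _ _ I0 I1 (card_c I1 D) (card_c I0 D) Hd1) (cprem c))%:R :> rat)%R
    by rewrite ltr0n.
  rewrite /cratio ler_pdivlMr // ler_pdivrMr //.
  rewrite !Ucard !natrD !natrM.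
  set m := ((card_c I1 D)%:R : rat).
  set n := ((card_c I0 D)%:R : rat).
  have hm : (0 <= m)%R by rewrite ler0n.
  have hn : (0 <= n)%R by rewrite ler0n.
  have := ler_wpM2l hm l0; have := ler_wpM2l hm u0.
  have := ler_wpM2l hn l1; have := ler_wpM2l hn u1.
  move=> *; split; nra.
- rewrite Ucard; rewrite addn_gt0; apply/orP; left; by rewrite muln_gt0 Hd1 Hd0.
- rewrite /cratio !Ucard !natrD !natrM.
  have h0 : ((card_c I0 D)%:R != 0 :> rat)%R by rewrite pnatr_eq0 -lt0n.
  have h1 : ((card_c I1 D)%:R != 0 :> rat)%R by rewrite pnatr_eq0 -lt0n.
  field.
  by rewrite h0 h1 /= -!natrM -natrD pnatr_eq0 -lt0n addn_gt0 muln_gt0 Hd1 Hd0.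
Qed.
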